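(* Let $p$ be an odd prime and $s\in\mathbb{Z}_p$ with $-2s=1$. For $x_1,x_2,y_1,y_2,w,v\in\mathbb{Z}_p$ consider the system in unknowns $(b_1,b_2)\in\mathbb{Z}_p^2$: $$b_1x_1+sb_1(1-b_1)y_1+b_2x_2+sb_2(1-b_2)y_2=w,\qquad b_1y_1+b_2y_2=v,$$ and let $\Delta:=(2wy_1+vy_1-v^2-2vx_1)(y_1+y_2)y_2+(vy_2+x_1y_2-x_2y_1)^2$. If $y_1,y_2,y_1+y_2\neq0$, then the system has exactly two solutions when $\Delta$ is a nonzero square in $\mathbb{Z}_p$, namely $b_1=\frac{vy_1+x_2y_1-x_1y_2\pm\sqrt\Delta}{y_1(y_1+y_2)}$, $b_2=\frac{vy_2+x_1y_2-x_2y_1\mp\sqrt\Delta}{y_2(y_1+y_2)}$; exactly one solution when $\Delta=0$; and none when $\Delta$ is a nonsquare. Moreover, if $(x_1,x_2,y_1,y_2,w,v)$ is uniformly random in $\mathbb{Z}_p^6$ and $\eta$ denotes the number of solutions, then conditioned on $y_1,y_2,y_1+y_2\neq0$ we have $\Pr(\eta=0)=\Pr(\eta=2)=\frac12-\frac1{2p}$ and $\Pr(\eta=1)=\frac1p$. *)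

(* Defs.v *)
From mathcomp Require Import all_boot all_order all_algebra.
Set Implicit Arguments. Unset Strict Implicit. Unset Printing Implicit Defensive.
Import Order.TTheory GRing.Theory Num.Theory.
Local Open Scope ring_scope.

(* Z_p is modelled as 'F_p (p an odd prime is assumed in the theorem). *)

Definition solset (p : nat) (s x1 x2 y1 y2 w v : 'F_p) : {set 'F_p * 'F_p} :=
  [set b : 'F_p * 'F_p |
     (b.1 * x1 + s * b.1 * (1 - b.1) * y1 + b.2 * x2 + s * b.2 * (1 - b.2) * y2 == w)
     && (b.1 * y1 + b.2 * y2 == v)].

Definition Delta (p : nat) (x1 x2 y1 y2 w v : 'F_p) : 'F_p :=
  (2 * w * y1 + v * y1 - v ^+ 2 - 2 * v * x1) * (y1 + y2) * y2
  + (v * y2 + x1 * y2 - x2 * y1) ^+ 2.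

Definition is_square (p : nat) (a : 'F_p) : Prop := exists r : 'F_p, r ^+ 2 = a.

Definition eta (p : nat) (s x1 x2 y1 y2 w v : 'F_p) : nat :=
  #|solset s x1 x2 y1 y2 w v|.

Definition tup (p : nat) : finType := ('F_p * 'F_p * 'F_p * 'F_p * 'F_p * 'F_p)%type.

Definition condev (p : nat) : {set tup p} :=
  [set t : tup p | let: (x1, x2, y1, y2, w, v) := t in
     [&& y1 != 0, y2 != 0 & y1 + y2 != 0]].

Definition eta_ev (p : nat) (s : 'F_p) (k : nat) : {set tup p} :=
  [set t : tup p | let: (x1, x2, y1, y2, w, v) := t in
     eta s x1 x2 y1 y2 w v == k].

Definition cond_prob (p : nat) (s : 'F_p) (k : nat) : rat :=
  (#|eta_ev s k :&: condev p|%:R) / (#|condev p|%:R).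

(* Main.v *)
Require Import Defs.
From mathcomp Require Import all_boot all_order all_algebra ring zify.
Import Order.TTheory GRing.Theory Num.Theory.
Local Open Scope ring_scope.
Set Implicit Arguments. Unset Strict Implicit.

Section Gen.
Variable F : fieldType.

Definition DeltaG (x1 x2 y1 y2 w v : F) : F :=
  (2 * w * y1 + v * y1 - v ^+ 2 - 2 * v * x1) * (y1 + y2) * y2
  + (v * y2 + x1 * y2 - x2 * y1) ^+ 2.

Lemma G1 (y1 y2 v b1 b2 : F) : y2 != 0 ->
  (b1 * y1 + b2 * y2 == v) = (b2 == (v - b1 * y1) / y2).
Proof. move=> h2; apply/eqP/eqP => [<-|->]; field; done. Qed.

Lemma G2 (s x1 x2 y1 y2 w v b1 b2 : F) : 2 != 0 :> F -> y2 != 0 -> - (2 * s) = 1 ->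
  b2 = (v - b1 * y1) / y2 ->
  (y1 * (y1 + y2) * b1 - (v * y1 + x2 * y1 - x1 * y2)) ^+ 2
    - DeltaG x1 x2 y1 y2 w v =
  (2 * y2 * (y1 * (y1 + y2))) *
  (b1 * x1 + s * b1 * (1 - b1) * y1 + b2 * x2 + s * b2 * (1 - b2) * y2 - w).
Proof.
move=> h2n h2 hs ->.
have -> : s = - 2^-1.
  apply: (mulfI h2n); rewrite mulrN mulfV //; apply: oppr_inj; by rewrite opprK hs.
rewrite /DeltaG; field; by rewrite h2 h2n.
Qed.

Lemma G3 (A N r b1 : F) : A != 0 -> (A * b1 - N == r) = (b1 == (N + r) / A).
Proof. move=> hA; apply/eqP/eqP => [<-|->]; field; done. Qed.

Lemma G4 (x1 x2 y1 y2 v r b1 : F) : y1 != 0 -> y2 != 0 -> y1 + y2 != 0 ->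
  b1 = ((v * y1 + x2 * y1 - x1 * y2) + r) / (y1 * (y1 + y2)) ->
  (v - b1 * y1) / y2 = (v * y2 + x1 * y2 - x2 * y1 - r) / (y2 * (y1 + y2)).
Proof. move=> h1 h2 h12 ->; field; by rewrite h12 h2 h1. Qed.

Lemma G5 (x1 x2 y1 y2 w1 w2 v : F) :
  DeltaG x1 x2 y1 y2 w1 v - DeltaG x1 x2 y1 y2 w2 v =
  2 * y1 * (y1 + y2) * y2 * (w1 - w2).
Proof. rewrite /DeltaG; ring. Qed.

Lemma G6 (a b k : F) : k != 0 -> (a * k) / (b * k) = a / b.
Proof. move=> hk; rewrite invfM mulrACA mulfV ?mulr1 //. Qed.

End Gen.

Lemma G7 (F : numFieldType) (q : nat) :
  (q%:R / (2 * q + 1)%:R : F) = 1 / 2 - 1 / (2 * (2 * q + 1)%N%:R).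
Proof.
have h2 : (2 : F) != 0 by rewrite pnatr_eq0.
have h3 : ((2 * q + 1)%N%:R : F) != 0 by rewrite pnatr_eq0 addn1.
move: h3; rewrite natrD natrM => h3.
field; exact: h3.
Qed.


Unset Implicit Arguments. Set Strict Implicit.

Lemma two_neq0 p : prime p -> odd p -> (2 : 'F_p) != 0.
Proof.
move=> hp hodd; rewrite -(dvdn_pcharf (pchar_Fp hp)).
apply/negP => /(dvdn_leq (isT : (0 < 2)%N)); rewrite leq_eqVlt ltnS.
case/orP => [/eqP e | h]; first by rewrite e in hodd.
by move: (prime_gt1 hp); rewrite ltnNge h.
Qed.

Lemma DeltaE p (x1 x2 y1 y2 w v : 'F_p) : Delta x1 x2 y1 y2 w v = DeltaG x1 x2 y1 y2 w v.
Proof. by []. Qed.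

Lemma mem_sol {p} (hp : prime p) (hodd : odd p) (s x1 x2 y1 y2 w v : 'F_p)
  (hs : - (2 * s) = 1) (h1 : y1 != 0) (h2 : y2 != 0) (h12 : y1 + y2 != 0)
  (b : 'F_p * 'F_p) :
  (b \in solset s x1 x2 y1 y2 w v) =
  (b.2 == (v - b.1 * y1) / y2) &&
  ((y1 * (y1 + y2) * b.1 - (v * y1 + x2 * y1 - x1 * y2)) ^+ 2
     == Delta x1 x2 y1 y2 w v).
Proof.
have h2n := two_neq0 _ hp hodd.
case: b => b1 b2 /=; rewrite /solset inE /=.
rewrite (G1 _ _ _ _ h2); case: (b2 =P _) => e2; rewrite ?andbT ?andbF //.
rewrite -subr_eq0 -[X in _ = X]subr_eq0 DeltaE (G2 x1 x2 w h2n h2 hs e2).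
rewrite mulf_eq0 !mulf_eq0 (negbTE h2n) (negbTE h2) (negbTE h1) (negbTE h12).
done.
Qed.

Lemma part1 p (hp : prime p) (hodd : odd p) (s : 'F_p) (hs : - (2 * s) = 1)
  (x1 x2 y1 y2 w v : 'F_p) :
     y1 != 0 -> y2 != 0 -> y1 + y2 != 0 ->
     [/\ (Delta x1 x2 y1 y2 w v != 0 -> is_square (Delta x1 x2 y1 y2 w v) ->
            eta s x1 x2 y1 y2 w v = 2%N /\
            forall r : 'F_p, r ^+ 2 = Delta x1 x2 y1 y2 w v ->
              solset s x1 x2 y1 y2 w v =
              [set ((v * y1 + x2 * y1 - x1 * y2 + r) / (y1 * (y1 + y2)),
                    (v * y2 + x1 * y2 - x2 * y1 - r) / (y2 * (y1 + y2)));
                   ((v * y1 + x2 * y1 - x1 * y2 - r) / (y1 * (y1 + y2)),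
                    (v * y2 + x1 * y2 - x2 * y1 + r) / (y2 * (y1 + y2)))]),
         (Delta x1 x2 y1 y2 w v = 0 -> eta s x1 x2 y1 y2 w v = 1%N) &
         (~ is_square (Delta x1 x2 y1 y2 w v) -> eta s x1 x2 y1 y2 w v = 0%N)].
Proof.
move=> h1 h2 h12.
have h2n := two_neq0 _ hp hodd.
have mem := mem_sol hp hodd s x1 x2 y1 y2 w v hs h1 h2 h12.
set D := Delta x1 x2 y1 y2 w v in mem *.
set N1 := v * y1 + x2 * y1 - x1 * y2 in mem *.
have hA : y1 * (y1 + y2) != 0 by rewrite mulf_neq0.
have setr : forall r : 'F_p, r ^+ 2 = D ->
   solset s x1 x2 y1 y2 w v =
              [set ((v * y1 + x2 * y1 - x1 * y2 + r) / (y1 * (y1 + y2)),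
                    (v * y2 + x1 * y2 - x2 * y1 - r) / (y2 * (y1 + y2)));
                   ((v * y1 + x2 * y1 - x1 * y2 - r) / (y1 * (y1 + y2)),
                    (v * y2 + x1 * y2 - x2 * y1 + r) / (y2 * (y1 + y2)))].
  move=> r hr; apply/setP => -[b1 b2]; rewrite mem in_set2 -hr eqf_sqr /=.
  rewrite !xpair_eqE !G3 //.
  apply/idP/idP.
  - case/andP => /eqP -> /orP [] /eqP e.
    + by rewrite (G4 h1 h2 h12 e) e !eqxx.
    + by rewrite (G4 h1 h2 h12 e) opprK e !eqxx orbT.
  - case/orP => /andP [/eqP e /eqP ->].
    + by rewrite (G4 h1 h2 h12 e) eqxx /= e eqxx.
    + by rewrite (G4 h1 h2 h12 e) opprK eqxx /= e eqxx orbT.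
split.
- move=> hD [r hr]; split; last exact: setr.
  rewrite /eta (setr r hr) cards2; case: eqP => // /eqP; rewrite xpair_eqE => /andP [/eqP e _].
  have := congr1 (fun z => z * (y1 * (y1 + y2))) e.
  rewrite /= !mulfVK // => /addrI e'.
  have : 2 * r = 0 by rewrite mulr_natl mulr2n {1}e' addNr.
  move/eqP; rewrite mulf_eq0 (negbTE h2n) /= => /eqP r0.
  by move: hD; rewrite -hr r0 expr0n.
- move=> hD; rewrite /eta.
  have -> : solset s x1 x2 y1 y2 w v = [set (N1 / (y1 * (y1 + y2)),
          (v - N1 / (y1 * (y1 + y2)) * y1) / y2)].
    apply/setP => -[b1 b2]; rewrite mem in_set1 hD /= xpair_eqE.
    rewrite expf_eq0 /= G3 // addr0.
    by case: (b1 =P _) => [->|_]; rewrite ?andbT ?andbF.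
  by rewrite cards1.
- move=> hns; rewrite /eta.
  have -> : solset s x1 x2 y1 y2 w v = set0.
    apply/setP => -[b1 b2]; rewrite mem in_set0 /=.
    apply/negP => /andP [_ /eqP e]; apply: hns; by exists (y1 * (y1 + y2) * b1 - N1).
  by rewrite cards0.
Qed.

Lemma sum_pair (A B : finType) (h : A * B -> nat) :
  (\sum_(t : A * B) h t = \sum_(a : A) \sum_(b : B) h (a, b))%N.
Proof. by rewrite pair_bigA; apply: eq_bigr => -[a b]. Qed.

Lemma sumb (T : finType) (P : pred T) :
  (\sum_(i : T) (P i : nat) = #|[set i | P i]|)%N.
Proof.
rewrite -sum1dep_card [RHS]big_mkcond; apply: eq_bigr => i _; by case: (P i).
Qed.

Definition DeltaT {p} (t : tup p) : 'F_p :=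
  let: (x1, x2, y1, y2, w, v) := t in Delta x1 x2 y1 y2 w v.

Definition Kc p : nat :=
  (\sum_(x1 : 'F_p) \sum_(x2 : 'F_p) \sum_(y1 : 'F_p) \sum_(y2 : 'F_p) \sum_(v : 'F_p)
    ([&& y1 != 0%R, y2 != 0%R & (y1 + y2)%R != 0%R] : nat))%N.

Lemma count_gen p (hp : prime p) (hodd : odd p) (P : pred 'F_p) :
  #|[set t : tup p | (t \in condev p) && P (DeltaT t)]| =
  (#|[set d | P d]| * Kc p)%N.
Proof.
have h2n := two_neq0 _ hp hodd.
rewrite -sum1dep_card big_mkcond /=.
rewrite !sum_pair /Kc big_distrr; apply: eq_bigr => x1 _.
rewrite big_distrr; apply: eq_bigr => x2 _.
rewrite big_distrr; apply: eq_bigr => y1 _.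
rewrite big_distrr; apply: eq_bigr => y2 _.
rewrite big_distrr exchange_big; apply: eq_bigr => v _.
case: (boolP [&& y1 != 0, y2 != 0 & y1 + y2 != 0]) => hc.
  rewrite [RHS]/= muln1.
  transitivity (\sum_(w : 'F_p) (P (Delta x1 x2 y1 y2 w v) : nat))%N.
    apply: eq_bigr => w _; rewrite inE /= hc /=; by case: (P _).
  have inj : injective (fun w => Delta x1 x2 y1 y2 w v).
    move=> w1 w2 /= /eqP; rewrite -subr_eq0 !DeltaE G5.
    case/and3P: hc => h1 h2 h12.
    rewrite !mulf_eq0 (negbTE h2n) (negbTE h1) (negbTE h2) (negbTE h12) /=.
    by rewrite subr_eq0 => /eqP.
  by rewrite -sumb [RHS](reindex_inj inj).
- rewrite [RHS]/= muln0; apply: big1 => w _; by rewrite inE /= (negbTE hc).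
Qed.

Definition sqb {p} (d : 'F_p) : bool := [exists r : 'F_p, r ^+ 2 == d].

Lemma card_sq p (hp : prime p) (hodd : odd p) :
  (#|[set d : 'F_p | (d != 0%R) && sqb d]| * 2)%N = p.-1.
Proof.
have h2n := two_neq0 _ hp hodd.
set Q := [set x : 'F_p | x != 0].
have cQ : #|Q| = p.-1.
  rewrite -[in RHS](card_Fp hp) -(cardsC1 0); apply: eq_card => x; by rewrite !inE.
have img : [set x ^+ 2 | x in Q] = [set d | (d != 0) && sqb d].
  apply/setP => d; rewrite inE; apply/imsetP/andP.
  - case => x; rewrite inE => hx ->; split; first by rewrite expf_neq0.
    by apply/existsP; exists x.
  - case => hd /existsP [r /eqP hr]; exists r; last by [].
    rewrite inE; apply: contraNneq hd => r0; by rewrite -hr r0 expr0n.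
rewrite -img -cQ -[in RHS]sum1_card [RHS](partition_big_imset (fun x => x ^+ 2)) /=.
rewrite -sum_nat_const; apply: eq_bigr => d /imsetP [y]; rewrite inE => hy ->.
rewrite sum1dep_card.
have -> : [set x | (x \in Q) && (x ^+ 2 == y ^+ 2)] = [set y; -y].
  apply/setP => x; rewrite !inE eqf_sqr.
  apply/idP/idP => [/andP [_ ->] // | h]; apply/andP; split => //.
  by case/orP: h => /eqP ->; rewrite ?oppr_eq0.
rewrite cards2.
suff -> : y != - y by [].
apply/eqP => e.
have : 2 * y = 0 by rewrite mulr_natl mulr2n {1}e addNr.
by apply/eqP; rewrite mulf_eq0 (negbTE h2n) (negbTE hy).
Qed.

Definition gk {p} (d : 'F_p) : nat :=
  if d == 0 then 1%N else if sqb d then 2%N else 0%N.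

Lemma eta_g p (hp : prime p) (hodd : odd p) (s : 'F_p) (hs : - (2 * s) = 1)
  (x1 x2 y1 y2 w v : 'F_p) :
  (x1, x2, y1, y2, w, v) \in condev p ->
  eta s x1 x2 y1 y2 w v = gk (DeltaT (x1, x2, y1, y2, w, v)).
Proof.
rewrite inE => /and3P [h1 h2 h12].
have [A B C] := part1 _ hp hodd s hs x1 x2 y1 y2 w v h1 h2 h12.
rewrite /gk /DeltaT; case: eqP => [D0 | Dn]; first exact: B.
case: (boolP (sqb _)) => [/existsP [r /eqP hr] | ns].
  have Dn' : Delta x1 x2 y1 y2 w v != 0 by apply/eqP.
  by case: (A Dn' (ex_intro _ r hr)).
apply: C => -[r hr]; move/negP: ns; apply; apply/existsP; exists r; exact/eqP.
Qed.

Lemma mem_ev p (hp : prime p) (hodd : odd p) (s : 'F_p) (hs : - (2 * s) = 1)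
  (k : nat) :
  eta_ev s k :&: condev p = [set t | (t \in condev p) && (gk (DeltaT t) == k)].
Proof.
apply/setP => t; rewrite in_setI [in RHS]inE andbC.
case: (boolP (t \in condev p)) => ht //.
move: ht; case: t => [[[[[x1 x2] y1] y2] w] v] ht.
by rewrite -(eta_g _ hp hodd s hs _ _ _ _ _ _ ht) inE.
Qed.

Theorem mainTheorem9 (p : nat) (hp : prime p) (hodd : odd p) (s : 'F_p)
  (hs : - (2 * s) = 1) :
  (forall x1 x2 y1 y2 w v : 'F_p,
     y1 != 0 -> y2 != 0 -> y1 + y2 != 0 ->
     [/\ (Delta x1 x2 y1 y2 w v != 0 -> is_square (Delta x1 x2 y1 y2 w v) ->
            eta s x1 x2 y1 y2 w v = 2%N /\
            forall r : 'F_p, r ^+ 2 = Delta x1 x2 y1 y2 w v ->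
              solset s x1 x2 y1 y2 w v =
              [set ((v * y1 + x2 * y1 - x1 * y2 + r) / (y1 * (y1 + y2)),
                    (v * y2 + x1 * y2 - x2 * y1 - r) / (y2 * (y1 + y2)));
                   ((v * y1 + x2 * y1 - x1 * y2 - r) / (y1 * (y1 + y2)),
                    (v * y2 + x1 * y2 - x2 * y1 + r) / (y2 * (y1 + y2)))]),
         (Delta x1 x2 y1 y2 w v = 0 -> eta s x1 x2 y1 y2 w v = 1%N) &
         (~ is_square (Delta x1 x2 y1 y2 w v) -> eta s x1 x2 y1 y2 w v = 0%N)])
  /\
  [/\ cond_prob s 0 = 1 / 2 - 1 / (2 * p%:R),
      cond_prob s 2 = 1 / 2 - 1 / (2 * p%:R) &
      cond_prob s 1 = 1 / p%:R].
Proof.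
split; first exact: (part1 _ hp hodd s hs).
have h2n := two_neq0 _ hp hodd.
have cc : #|condev p| = (p * Kc p)%N.
  have := count_gen _ hp hodd xpredT.
  have -> : [set t : tup p | (t \in condev p) && xpredT (DeltaT t)] = condev p.
    by apply/setP => t; rewrite inE andbT.
  move=> ->; congr (_ * _)%N.
  rewrite -[RHS](card_Fp hp); apply: eq_card => d; by rewrite inE.
have Kpos : (0 < Kc p)%N.
  have : (0 < #|condev p|)%N.
    apply/card_gt0P; exists (0%R, 0%R, 1%R, 1%R, 0%R, 0%R).
    rewrite inE; apply/and3P; split; [exact: oner_neq0 | exact: oner_neq0 | exact: h2n].
  by rewrite cc muln_gt0 => /andP [].
have pr : forall k, cond_prob s k = #|[set d : 'F_p | gk d == k]|%:R / p%:R.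
  move=> k; rewrite /cond_prob (mem_ev _ hp hodd s hs k).
  rewrite (count_gen _ hp hodd (fun d => gk d == k)) cc !natrM G6 //.
  by rewrite pnatr_eq0 -lt0n.
set c2 := #|[set d : 'F_p | (d != 0) && sqb d]|.
have csq := card_sq _ hp hodd.
have C1 : #|[set d : 'F_p | gk d == 1%N]| = 1%N.
  rewrite -[RHS](cards1 (0 : 'F_p)); apply: eq_card => d; rewrite !inE /gk.
  by case: (d == 0) => //; case: (sqb d).
have C2 : #|[set d : 'F_p | gk d == 2%N]| = c2.
  apply: eq_card => d; rewrite !inE /gk.
  by case: (d == 0) => //; case: (sqb d).
have Csum : (#|[set d : 'F_p | gk d == 0%N]| + 1 + c2)%N = p.
  rewrite -C1 -C2 -!sumb -big_split -big_split /= -[RHS](card_Fp hp) -sum1_card.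
  apply: eq_bigr => d _; rewrite /gk.
  by case: (d == 0) => //; case: (sqb d).
have pE : p = (2 * c2 + 1)%N by move: csq (prime_gt0 hp); rewrite -/c2; lia.
have C0 : #|[set d : 'F_p | gk d == 0%N]| = c2.
  move: Csum; rewrite pE; lia.
rewrite !pr C0 C1 C2 pE; by split => //; rewrite G7.
Qed.
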